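(* Let $k\ge2$ and set $z_{cr}=-\log\sigma+c_0\langle\sigma,\log\sigma\rangle\mathbf 1\in\Pi$. (i) For any $R>0$ and any $\epsilon>0$ small enough there exists $\eta=\eta(R,\epsilon)>0$ such that for all $z\in\Pi$ and $b\in\mathbb R^{k-1}$ with $|z|\le R$ and $|z-z_{cr}|+\min(|\cos b-\mathbf 1|,|\cos b+\mathbf 1|)\ge\epsilon$, one has $$|P_\sigma(\cos b\,e^{-z})|+|\sin b\,e^{-z}|\ge\eta.$$ (ii) There exist $\epsilon_0>0$ and $C>0$ such that for all $z\in\Pi$ and $b\in\mathbb R^{k-1}$ with $|z-z_{cr}|+|b-\pi\mathbf 1|\le\epsilon_0$, $$|P_\sigma(\cos b\,e^{-z})|+|\sin b\,e^{-z}|\ge C^{-1}\big(|z-z_{cr}|+|b-\pi\mathbf 1|\big).$$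
   Context: $\langle\cdot,\cdot\rangle$ and $|\cdot|$ are the Euclidean inner product and norm on $\mathbb R^{k-1}$; functions such as $\cos b$, $\sin b$, $e^{-z}$, $\log\sigma$ act componentwise, and $\cos b\,e^{-z}$ denotes the vector with components $\cos b_j\,e^{-z_j}$. $\mathbf 1=(1,\dots,1)$, $\sigma_j=\frac{j(k-j)}2$ for $j=1,\dots,k-1$, $c_0=1/\langle\sigma,\mathbf 1\rangle$, $\Pi=\{v\in\mathbb R^{k-1}:\langle\sigma,v\rangle=0\}$, and $P_\sigma v=v-\frac{\langle\sigma,v\rangle}{|\sigma|^2}\sigma$. *)

(* Defs.v *)
From HB Require Import structures.
From mathcomp Require Import all_boot all_order all_algebra.
From mathcomp Require Import all_classical all_reals all_analysis.
Set Implicit Arguments. Unset Strict Implicit. Unset Printing Implicit Defensive.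
Import Order.TTheory GRing.Theory Num.Theory.
Local Open Scope ring_scope.

Section Defs.
Variable R : realType.
Variable n : nat.

Definition dotv (u v : 'rV[R]_n) : R := \sum_(i < n) u 0 i * v 0 i.
Definition normv (v : 'rV[R]_n) : R := Num.sqrt (dotv v v).

Definition vmap (f : R -> R) (v : 'rV[R]_n) : 'rV[R]_n := \row_i f (v 0 i).
Definition vmul (u v : 'rV[R]_n) : 'rV[R]_n := \row_i (u 0 i * v 0 i).
Definition ones : 'rV[R]_n := \row_i 1.
End Defs.

(* sigma_j = j (k - j) / 2 for j = 1..k-1; index i : 'I_(k-1) stands for j = i+1 *)
Definition sigmav (R : realType) (k : nat) : 'rV[R]_(k.-1) :=
  \row_(i < k.-1) (((i.+1 * (k - i.+1))%N)%:R / 2).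

Definition c0 (R : realType) (k : nat) : R := (dotv (sigmav R k) (ones R _))^-1.

Definition PiSet (R : realType) (k : nat) : set 'rV[R]_(k.-1) :=
  [set v | dotv (sigmav R k) v = 0].

Definition Psigma (R : realType) (k : nat) (v : 'rV[R]_(k.-1)) : 'rV[R]_(k.-1) :=
  v - (dotv (sigmav R k) v / dotv (sigmav R k) (sigmav R k)) *: sigmav R k.

Definition zcr (R : realType) (k : nat) : 'rV[R]_(k.-1) :=
  - vmap (@ln R) (sigmav R k)
  + (c0 R k * dotv (sigmav R k) (vmap (@ln R) (sigmav R k))) *: ones R _.

Definition Fq (R : realType) (k : nat) (z b : 'rV[R]_(k.-1)) : R :=
  normv (@Psigma R k (vmul (vmap (@cos R) b) (vmap (fun x => expR (- x)) z)))
  + normv (vmul (vmap (@sin R) b) (vmap (fun x => expR (- x)) z)).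

(* Main.v *)
Require Import Defs.
From HB Require Import structures.
From mathcomp Require Import all_boot all_order all_algebra.
From mathcomp Require Import all_classical all_reals all_analysis.
From mathcomp Require Import zify ring lra.
Import Order.TTheory GRing.Theory Num.Theory.
Import numFieldNormedType.Exports.
Local Open Scope ring_scope.

Section NormLemmas.
Variable R : realType.
Variable n : nat.
Implicit Types u v : 'rV[R]_n.

Lemma dotv_sq_ge0 v : 0 <= dotv v v.
Proof. by apply: sumr_ge0 => i _; rewrite -expr2 sqr_ge0. Qed.

Lemma normv_ge0 v : 0 <= normv v.
Proof. exact: sqrtr_ge0. Qed.

Lemma normv_comp v j : `|v 0 j| <= normv v.
Proof.
rewrite /normv -sqrtr_sqr ler_sqrt ?dotv_sq_ge0 // /dotv (bigD1 j) //= expr2.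
by rewrite lerDl; apply: sumr_ge0 => i _; rewrite -expr2 sqr_ge0.
Qed.

Lemma normv_dom u v a : 0 <= a -> (forall j, `|u 0 j| <= a * `|v 0 j|) ->
  normv u <= a * normv v.
Proof.
move=> a0 H; rewrite /normv -(ger0_norm a0) -sqrtr_sqr -sqrtrM ?sqr_ge0 //.
rewrite ler_sqrt; last by apply: mulr_ge0; [exact: sqr_ge0|exact: dotv_sq_ge0].
rewrite /dotv mulr_sumr; apply: ler_sum => i _.
have h : `|u 0 i| ^+ 2 <= (a * `|v 0 i|) ^+ 2.
  by apply: lerXn2r; rewrite ?nnegrE ?mulr_ge0 ?normr_ge0.
by rewrite exprMn !real_normK ?num_real // in h; rewrite -!expr2.
Qed.

Lemma normv_bound v a : (forall j, `|v 0 j| <= a) -> normv v <= n%:R * a.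
Proof.
case: n v => [|m] v H.
  by rewrite /normv /dotv big_ord0 sqrtr0 mul0r.
have a0 : 0 <= a := le_trans (normr_ge0 _) (H ord0).
have na0 : 0 <= m.+1%:R * a by apply: mulr_ge0.
rewrite /normv -(ger0_norm na0) -sqrtr_sqr ler_sqrt ?sqr_ge0 //.
apply: (@le_trans _ _ (\sum_(i < m.+1) a ^+ 2)).
  apply: ler_sum => i _.
  have h : `|v 0 i| ^+ 2 <= a ^+ 2 by apply: lerXn2r; rewrite ?nnegrE ?normr_ge0.
  by rewrite real_normK ?num_real // in h; rewrite -expr2.
rewrite sumr_const card_ord -mulr_natl exprMn.
have h : (m.+1%:R : R) <= m.+1%:R ^+ 2 by rewrite -natrX ler_nat; nia.
have := sqr_ge0 a; nra.
Qed.
End NormLemmas.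
Arguments dotv_sq_ge0 {R n}.
Arguments normv_ge0 {R n}.
Arguments normv_comp {R n}.
Arguments normv_dom {R n}.
Arguments normv_bound {R n}.

Section Trig.
Variable R : realType.

Lemma mvt_any (f df : R -> R) : (forall x : R, is_derive x (1:R) f (df x)) ->
  continuous f -> forall a b : R, exists c, `|c - a| <= `|b - a| /\ f b - f a = df c * (b - a).
Proof.
move=> Hd Hc a b; case: (leP a b) => ab.
  have [c cin E] := MVT_segment ab (fun x _ => Hd x) (continuous_subspaceT Hc).
  exists c; split => //; move: cin; rewrite in_itv /= => /andP[h1 h2].
  rewrite !ger0_norm ?subr_ge0 //; lra.
have ba : b <= a by apply: ltW.
have [c cin E] := MVT_segment ba (fun x _ => Hd x) (continuous_subspaceT Hc).
exists c; split.
  move: cin; rewrite in_itv /= => /andP[h1 h2].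
  rewrite (ler0_norm (x:=b - a)) ?subr_le0 //.
  rewrite distrC ger0_norm ?subr_ge0 //; lra.
have -> : f b - f a = - (f a - f b) by ring.
by rewrite E; ring.
Qed.

Lemma sin_lb (x : R) : `|x| <= 1 -> cos 1 * `|x| <= `|sin x|.
Proof.
move=> hx.
have [c [hc E]] := @mvt_any sin cos (fun y => is_derive_sin y) (@continuous_sin R) 0 x.
rewrite sin0 !subr0 in E hc; rewrite E normrM [`|cos c|]ger0_norm; last first.
  rewrite -cos_norm; apply: cos_ge0_pihalf; have := pihalf_ge1 R.
  have := normr_ge0 c; lra.
apply: ler_wpM2r; first exact: normr_ge0.
rewrite -[cos c]cos_norm.
have h1 : `|c| <= 1 by apply: le_trans hx.
have pi2 := pi_ge2 R.
move: h1; rewrite le_eqVlt => /orP[/eqP ->|h]; first by [].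
apply: ltW; rewrite ltr_cos // in_itv /= ?normr_ge0; lra.
Qed.

Lemma one_sub_cos (x : R) : `|1 - cos x| <= `|x|.
Proof.
have [c [hc E]] := @mvt_any cos (fun y => - sin y) (fun y => is_derive_cos y) (@continuous_cos R) 0 x.
rewrite cos0 subr0 in E hc.
rewrite -normrN opprB E normrM -[X in _ <= X]mul1r ler_wpM2r ?normr_ge0 //.
by rewrite normrN sin_max.
Qed.
End Trig.
Arguments sin_lb {R}.
Arguments one_sub_cos {R}.

Section Sig.
Variable R : realType.
Variable k : nat.
Hypothesis hk : (2 <= k)%N.

Local Notation sg := (sigmav R k).
Local Notation K := ((k * k)%N%:R : R).

Lemma onesE n (i : 'I_n) : ones R n 0 i = 1.
Proof. by rewrite /ones mxE. Qed.

Lemma sig_lb (i : 'I_k.-1) : 1/2 <= sg 0 i.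
Proof.
rewrite /sigmav mxE ler_pM2r // ler1n.
have := ltn_ord i; nia.
Qed.

Lemma sig_ub (i : 'I_k.-1) : sg 0 i <= K.
Proof.
rewrite /sigmav mxE.
have h : ((i.+1 * (k - i.+1))%N%:R : R) <= K by rewrite ler_nat; have := ltn_ord i; nia.
have h0 : (0 : R) <= (i.+1 * (k - i.+1))%N%:R by [].
lra.
Qed.

Lemma sig_gt0 (i : 'I_k.-1) : 0 < sg 0 i.
Proof. have := sig_lb i; lra. Qed.

Lemma sumsig_gt0 : 0 < dotv sg (ones R _).
Proof.
have h : (0 < k.-1)%N by case: k hk => [|[|k']].
rewrite /dotv (bigD1 (Ordinal h)) //=; apply: ltr_pwDl; last first.
  by apply: sumr_ge0 => i _; rewrite onesE mulr1 ltW // sig_gt0.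
by rewrite onesE mulr1 sig_gt0.
Qed.

Lemma c0_sum : c0 R k * dotv sg (ones R _) = 1.
Proof. by rewrite /c0 mulVf // gt_eqF // sumsig_gt0. Qed.

Lemma c0_gt0 : 0 < c0 R k.
Proof. by rewrite /c0 invr_gt0 sumsig_gt0. Qed.

Lemma ln_diff_le (x y : R) : 0 < x -> 0 < y -> ln x - ln y <= (x - y) / y.
Proof.
move=> x0 y0; rewrite -ln_div ?posrE //.
have -> : x / y = 1 + (x / y - 1) by ring.
have -> : (x - y) / y = x / y - 1 by rewrite mulrBl divff // gt_eqF.
apply: le_ln1Dx; have : 0 < x / y by apply: divr_gt0.
lra.
Qed.

Lemma keyA (z : 'rV[R]_(k.-1)) (m lam D : R) : dotv sg z = 0 -> 0 < m ->
  (forall j, m <= expR (- z 0 j)) ->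
  (forall j, `|expR (- z 0 j) - lam * sg 0 j| <= D) ->
  forall j, `|(z - zcr R k) 0 j| <= 4 * K * D / m.
Proof.
move=> Hz m0 Hm HD j.
pose u i := expR (- z 0 i) / sg 0 i.
have u0 i : 0 < u i by apply: divr_gt0; [exact: expR_gt0|exact: sig_gt0].
have lnu i : ln (u i) = - z 0 i - ln (sg 0 i).
  by rewrite ln_div ?posrE ?expR_gt0 ?sig_gt0 // expRK.
have D0 : 0 <= D := le_trans (normr_ge0 _) (HD j).
have K0 : 0 < K by rewrite ltr0n; nia.
have ulam i : `|u i - lam| <= 2 * D.
  have -> : u i - lam = (expR (- z 0 i) - lam * sg 0 i) / sg 0 i.
    by rewrite /u mulrBl -mulrA divff ?mulr1 // gt_eqF // sig_gt0.
  have hs := sig_lb i; have hs0 := sig_gt0 i.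
  rewrite normrM normfV (gtr0_norm hs0) ler_pdivrMr //.
  have := HD i; nra.
have ulb i : m / K <= u i.
  rewrite /u ler_pdivrMr // mulrAC ler_pdivlMr ?sig_gt0 //.
  have := Hm i; have := sig_ub i; have := sig_gt0 i; nra.
have B i : ln (u i) - ln (u j) <= 4 * K * D / m.
  apply: (le_trans (ln_diff_le (u i) (u j) (u0 i) (u0 j))).
  have h1 : u i - u j <= 4 * D.
    have := ulam i; have := ulam j; rewrite !ler_norml; lra.
  have h2 := ulb j; have h3 := u0 j.
  rewrite ler_pdivrMr // mulrAC ler_pdivlMr //.
  have : m <= K * u j by move: h2; rewrite ler_pdivrMr // mulrC.
  nra.
have B' i : `|ln (u i) - ln (u j)| <= 4 * K * D / m.
  rewrite ler_norml B andbT.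
  have h3 := ln_diff_le (u j) (u i) (u0 j) (u0 i).
  have := ulb i; have := u0 i; have h1 : u j - u i <= 4 * D.
    have := ulam i; have := ulam j; rewrite !ler_norml; lra.
  move=> ui0 hui.
  have : (u j - u i) / u i <= 4 * K * D / m.
    rewrite ler_pdivrMr // mulrAC ler_pdivlMr //.
    have : m <= K * u i by move: hui; rewrite ler_pdivrMr // mulrC.
    nra.
  lra.
have E : (z - zcr R k) 0 j = c0 R k * \sum_i sg 0 i * (ln (u i) - ln (u j)).
  have S : \sum_i sg 0 i * (ln (u i) - ln (u j)) =
      - dotv sg z - dotv sg (vmap (@ln R) sg) + dotv sg (ones R _) * (z 0 j + ln (sg 0 j)).
    rewrite /dotv -!sumrN mulr_suml -!big_split /=; apply: eq_bigr => i _.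
    rewrite !lnu !mxE; ring.
  rewrite S Hz /zcr !mxE mulrDr mulrBr mulrA c0_sum; ring.
rewrite E normrM (gtr0_norm c0_gt0).
have hs : `|\sum_i sg 0 i * (ln (u i) - ln (u j))| <= \sum_i sg 0 i * (4 * K * D / m).
  apply: (le_trans (ler_norm_sum _ _ _)); apply: ler_sum => i _.
  rewrite normrM (gtr0_norm (sig_gt0 i)); apply: ler_wpM2l; [exact: ltW (sig_gt0 i)|exact: B'].
apply: (le_trans (ler_wpM2l (ltW c0_gt0) hs)).
rewrite -mulr_suml mulrA.
have -> : \sum_i sg 0 i = dotv sg (ones R _) by apply: eq_bigr => i _; rewrite onesE mulr1.
rewrite (_ : forall a b c d : R, a * (b * c / d) = (a * b) * (c / d)); last by move=> *; ring.
by rewrite c0_sum mul1r.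
Qed.

Lemma fin_arith (nz nb p q A M B : R) : 0 <= p -> 0 <= q -> 0 <= A -> 0 <= M -> 0 < B ->
  nz <= A * (p + M * nb) -> nb <= B * q -> 0 <= nb ->
  nz + nb <= (A + (A * M + 1) * B + 1) * (p + q).
Proof.
move=> p0 q0 A0 M0 B0 h1 h2 nb0.
have AM : 0 <= A * M + 1 by have := mulr_ge0 A0 M0; lra.
have h3 : (A * M + 1) * nb <= (A * M + 1) * (B * q) by apply: ler_wpM2l.
have h4 : 0 <= (A * M + 1) * B * p by apply: mulr_ge0 => //; apply: mulr_ge0 => //; apply: ltW.
have h5 : 0 <= A * q by apply: mulr_ge0.
nra.
Qed.

Lemma vmulE n (u v : 'rV[R]_n) j : vmul u v 0 j = u 0 j * v 0 j.
Proof. by rewrite /vmul mxE. Qed.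
Lemma vmapE n f (v : 'rV[R]_n) j : vmap f v 0 j = f (v 0 j).
Proof. by rewrite /vmap mxE. Qed.
Lemma PsigmaE (v : 'rV[R]_k.-1) j : Psigma v 0 j =
  v 0 j - (dotv sg v / dotv sg sg) * sg 0 j.
Proof. by rewrite /Psigma !mxE. Qed.

Lemma part2 : exists eps0 C : R, 0 < eps0 /\ 0 < C /\
    forall z b : 'rV[R]_(k.-1),
      @PiSet R k z ->
      normv (z - @zcr R k) + normv (b - pi *: @ones R _) <= eps0 ->
      C^-1 * (normv (z - @zcr R k) + normv (b - pi *: @ones R _)) <= @Fq R k z b.
Proof.
set Zc := normv (zcr R k).
set m := expR (- (Zc + 1)); set M := expR (Zc + 1).
have m0 : 0 < m := expR_gt0 _. have M0 : 0 < M := expR_gt0 _.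
have c10 : 0 < cos (1 : R) := cos1_gt0 R.
set A := (k.-1)%:R * (4 * K / m).
have K0 : 0 < K by rewrite ltr0n; nia.
have A0 : 0 <= A.
  apply: mulr_ge0; first exact: ler0n.
  apply: divr_ge0; last exact: ltW.
  apply: mulr_ge0; [lra|exact: ltW].
set B := (cos 1 * m)^-1.
have B0 : 0 < B by rewrite invr_gt0 mulr_gt0.
exists (1/2), (A + (A * M + 1) * B + 1); split => //; split.
  have AM : 0 <= A * M by apply: mulr_ge0 => //; apply: ltW.
  have : 0 <= (A * M + 1) * B by apply: mulr_ge0; [lra|apply: ltW].
  lra.
move=> z b Hz Hsum.
set zeta := z - zcr R k; set beta := b - pi *: ones R _.
have nz0 := normv_ge0 zeta; have nb0 := normv_ge0 beta.
have Hzj j : `|z 0 j| <= Zc + 1.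
  have -> : z 0 j = zeta 0 j + zcr R k 0 j by rewrite /zeta !mxE; ring.
  apply: (le_trans (ler_normD _ _)).
  have := normv_comp zeta j; have := normv_comp (zcr R k) j; rewrite -/Zc; lra.
have em j : m <= expR (- z 0 j).
  by rewrite /m ler_expR lerN2; have := Hzj j; rewrite ler_norml; lra.
have eM j : expR (- z 0 j) <= M.
  by rewrite /M ler_expR; have := Hzj j; rewrite ler_norml; lra.
have bj j : b 0 j = beta 0 j + pi by rewrite /beta !mxE; ring.
have betaj j : `|beta 0 j| <= 1/2 by have := normv_comp beta j; lra.
rewrite /Fq.
set w := vmul (vmap cos b) (vmap (fun x => expR (- x)) z).
set s := vmul (vmap sin b) (vmap (fun x => expR (- x)) z).
set p := normv (Psigma w); set q := normv s.
have p0 := normv_ge0 (Psigma w); have q0 := normv_ge0 s.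
have hq : normv beta <= B * q.
  apply: normv_dom; first exact: ltW.
  move=> j; rewrite /s vmulE !vmapE bj (sinDpi (beta 0 j)) mulNr normrN normrM.
  rewrite (gtr0_norm (expR_gt0 _)).
  have h1 : cos 1 * `|beta 0 j| <= `|sin (beta 0 j)|.
    by apply: sin_lb; have := betaj j; lra.
  have h2 := em j.
  rewrite /B mulrC ler_pdivlMr; last exact: mulr_gt0.
  have := normr_ge0 (beta 0 j); have := normr_ge0 (sin (beta 0 j)); nra.
set lamw := dotv sg w / dotv sg sg.
have hp j : `|expR (- z 0 j) - (- lamw) * sg 0 j| <= p + M * normv beta.
  have hc := normv_comp (Psigma w) j; rewrite PsigmaE -/lamw -/p in hc.
  have -> : expR (- z 0 j) - (- lamw) * sg 0 j =
      - (w 0 j - lamw * sg 0 j) + (1 - cos (beta 0 j)) * expR (- z 0 j).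
    by rewrite /w vmulE !vmapE bj (cosDpi (beta 0 j)); ring.
  apply: (le_trans (ler_normD _ _)); rewrite normrN normrM (gtr0_norm (expR_gt0 _)).
  have h1 := one_sub_cos (beta 0 j); have h2 := eM j; have h3 := normv_comp beta j.
  have := normr_ge0 (1 - cos (beta 0 j)); have := normr_ge0 (beta 0 j); nra.
have hz j : `|zeta 0 j| <= 4 * K * (p + M * normv beta) / m.
  exact: (@keyA z m (- lamw) (p + M * normv beta) Hz m0 em hp j).
have hnz : normv zeta <= A * (p + M * normv beta).
  have -> : A * (p + M * normv beta) = k.-1%:R * (4 * K * (p + M * normv beta) / m).
    by rewrite /A; ring.
  exact: normv_bound.
have C0 : 0 < A + (A * M + 1) * B + 1.
  have AM : 0 <= A * M by apply: mulr_ge0 => //; apply: ltW.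
  have : 0 <= (A * M + 1) * B by apply: mulr_ge0; [lra|apply: ltW].
  lra.
rewrite mulrC ler_pdivrMr // mulrC.
by apply: fin_arith => //; [exact: ltW].
Qed.

Lemma core1 (z b : 'rV[R]_(k.-1)) (m M : R) : @PiSet R k z -> 0 < m ->
  (forall j, m <= expR (- z 0 j)) -> (forall j, expR (- z 0 j) <= M) ->
  Fq z b <= m / 4 ->
  normv (z - zcr R k) + Num.min (normv (vmap (@cos R) b - ones R _))
                       (normv (vmap (@cos R) b + ones R _)) <=
  ((k.-1)%:R * (4 * K * (1 + M / (4 * m)) / m) + (k.-1)%:R / (4 * m)) * Fq z b.
Proof.
move=> Hz m0 em eM.
rewrite /Fq.
set w := vmul (vmap cos b) (vmap (fun x => expR (- x)) z).
set s := vmul (vmap sin b) (vmap (fun x => expR (- x)) z).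
set p := normv (Psigma w); set q := normv s.
have p0 : 0 <= p := normv_ge0 _; have q0 : 0 <= q := normv_ge0 _.
set d := p + q => hd.
set y := d / m.
have y0 : 0 <= y by apply: divr_ge0; [rewrite /d; lra|exact: ltW].
have y4 : y <= 1/4 by rewrite /y ler_pdivrMr //; lra.
have K0 : 0 < K by rewrite ltr0n; nia.
have ht j : 0 <= 1 - `|cos (b 0 j)| <= y / 4.
  have hs : `|sin (b 0 j)| <= y.
    have := normv_comp s j; rewrite /s vmulE !vmapE normrM (gtr0_norm (expR_gt0 _)) -/q => h.
    rewrite /y ler_pdivlMr //; have := em j; have := normr_ge0 (sin (b 0 j)).
    rewrite /d; nra.
  have c1 := cos_max (b 0 j); have c2 := cos2Dsin2 (b 0 j).
  have c3 : `|cos (b 0 j)| ^+ 2 = cos (b 0 j) ^+ 2 by rewrite real_normK ?num_real.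
  have c4 : `|sin (b 0 j)| ^+ 2 = sin (b 0 j) ^+ 2 by rewrite real_normK ?num_real.
  have c5 := normr_ge0 (cos (b 0 j)); have c6 := normr_ge0 (sin (b 0 j)).
  apply/andP; split; first lra.
  rewrite -c3 -c4 !expr2 in c2; nra.
set lam := dotv sg w / dotv sg sg.
have hpj j : `|w 0 j - lam * sg 0 j| <= d.
  have := normv_comp (Psigma w) j; rewrite PsigmaE -/lam -/p /d; lra.
have hD j : `|expR (- z 0 j) - `|lam| * sg 0 j| <= d + M * (y / 4).
  have h1 := ler_dist_dist (w 0 j) (lam * sg 0 j).
  rewrite normrM (gtr0_norm (sig_gt0 j)) in h1.
  have -> : expR (- z 0 j) - `|lam| * sg 0 j =
     (`|w 0 j| - `|lam| * sg 0 j) + (1 - `|cos (b 0 j)|) * expR (- z 0 j).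
    rewrite /w vmulE !vmapE /= [`|cos _ * _|]normrM [X in `|cos _| * X]ger0_norm ?expR_ge0 //; ring.
  apply: (le_trans (ler_normD _ _)).
  rewrite [`|(1 - _) * _|]normrM [X in `|1 - _| * X]ger0_norm ?expR_ge0 // [X in X * expR _]ger0_norm; last by case/andP: (ht j).
  have := hpj j; have := ht j; have := eM j; have := expR_gt0 (- z 0 j).
  move=> e0 e1 /andP[t0 t1] h2.
  have : (1 - `|cos (b 0 j)|) * expR (- z 0 j) <= M * (y / 4) by nra.
  have := ler_norm (`|w 0 j| - `|lam| * sg 0 j).
  lra.
have hz j := @keyA z m `|lam| (d + M * (y / 4)) Hz m0 em hD j.
have hnz := normv_bound _ _ hz.
have hmin : Num.min (normv (vmap cos b - ones R _)) (normv (vmap cos b + ones R _))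
    <= (k.-1)%:R * (y / 4).
  rewrite ge_min; apply/orP.
  case: (leP 0 lam) => hl; [left|right]; apply: normv_bound => j;
    rewrite !mxE.
  - have hls : 0 <= lam * sg 0 j by apply: mulr_ge0 => //; exact: ltW (sig_gt0 j).
    have hw := hpj j; rewrite /w vmulE !vmapE /= in hw.
    have e0 := em j; have /andP[t0 t1] := ht j.
    have hc : 0 <= cos (b 0 j).
      rewrite leNgt; apply/negP => hc.
      rewrite ltr0_norm // in t1.
      have h1 : cos (b 0 j) * expR (- z 0 j) <= -(15/16) * m by nra.
      move: hw; rewrite ler_norml => /andP[h2 _]; nra.
    rewrite ger0_norm // in t1; rewrite ler0_norm; last by have := cos_le1 (b 0 j); lra.
    lra.
  - have hls : lam * sg 0 j <= 0 by apply: mulr_le0_ge0; [exact: ltW|exact: ltW (sig_gt0 j)].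
    have hw := hpj j; rewrite /w vmulE !vmapE /= in hw.
    have e0 := em j; have /andP[t0 t1] := ht j.
    have hc : cos (b 0 j) <= 0.
      rewrite leNgt; apply/negP => hc.
      rewrite gtr0_norm // in t1.
      have h1 : (15/16) * m <= cos (b 0 j) * expR (- z 0 j) by nra.
      move: hw; rewrite ler_norml => /andP[_ h2]; nra.
    rewrite ler0_norm // in t1; rewrite ger0_norm; last by have := cos_geN1 (b 0 j); lra.
    lra.
have e1 : normv (z - zcr R k) + Num.min (normv (vmap cos b - ones R _)) (normv (vmap cos b + ones R _))
   <= (k.-1)%:R * (4 * K * (d + M * (y / 4)) / m) + (k.-1)%:R * (y / 4) by lra.
apply: (le_trans e1); rewrite le_eqVlt; apply/orP; left; apply/eqP.
rewrite /y; field; lra.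
Qed.

Lemma part1 : forall Rad : R, 0 < Rad ->
    exists eps1 : R, 0 < eps1 /\
    forall eps : R, 0 < eps -> eps < eps1 ->
    exists eta : R, 0 < eta /\
    forall z b : 'rV[R]_(k.-1),
      @PiSet R k z ->
      normv z <= Rad ->
      eps <= normv (z - @zcr R k)
             + Num.min (normv (vmap (@cos R) b - @ones R _))
                       (normv (vmap (@cos R) b + @ones R _)) ->
      eta <= @Fq R k z b.
Proof.
move=> Rad R0; exists 1; split => // eps e0 e1.
set m := expR (- Rad); set M := expR Rad.
have m0 : 0 < m := expR_gt0 _. have M0 : 0 < M := expR_gt0 _.
have K0 : 0 < K by rewrite ltr0n; nia.
set C := (k.-1)%:R * (4 * K * (1 + M / (4 * m)) / m) + (k.-1)%:R / (4 * m).
have C0 : 0 <= C.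
  apply: addr_ge0; apply: mulr_ge0 => //; last by rewrite invr_ge0; lra.
  apply: divr_ge0; last exact: ltW.
  apply: mulr_ge0; first lra.
  have : 0 <= M / (4 * m) by apply: divr_ge0; lra.
  lra.
set iM := 4 / m.
have iM0 : 0 < iM by apply: divr_gt0 => //.
have iMm : iM * m = 4 by rewrite /iM divfK // gt_eqF.
set eta := eps / (C + iM).
have eta0 : 0 < eta by apply: divr_gt0 => //; lra.
have hE : eta * (C + iM) = eps by rewrite /eta divfK // gt_eqF //; lra.
have hC : 0 <= eta * C by apply: mulr_ge0 => //; exact: ltW.
have h1 : eta * iM < 1 by move: hE; rewrite mulrDr; lra.
have h2 : eta * iM * m < m by nra.
rewrite -mulrA iMm in h2.
exists eta; split => // z b Hz Hn Heps.
rewrite leNgt; apply/negP => hF.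
have Hzj j : `|z 0 j| <= Rad by apply: le_trans (normv_comp z j) Hn.
have em j : m <= expR (- z 0 j).
  by rewrite /m ler_expR lerN2; have := Hzj j; rewrite ler_norml; lra.
have eM j : expR (- z 0 j) <= M.
  by rewrite /M ler_expR; have := Hzj j; rewrite ler_norml; lra.
have hd : Fq z b <= m / 4 by lra.
have := @core1 z b m M Hz m0 em eM hd; rewrite -/C => hQ.
have : C * Fq z b <= C * eta by apply: ler_wpM2l => //; exact: ltW.
have := mulr_gt0 eta0 iM0; move: hE; rewrite mulrDr; lra.
Qed.
End Sig.

Theorem mainTheorem10 (R : realType) (k : nat) (hk : (2 <= k)%N) :
  (* (i) *)
  (forall Rad : R, 0 < Rad ->
    exists eps1 : R, 0 < eps1 /\
    forall eps : R, 0 < eps -> eps < eps1 ->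
    exists eta : R, 0 < eta /\
    forall z b : 'rV[R]_(k.-1),
      @PiSet R k z ->
      normv z <= Rad ->
      eps <= normv (z - @zcr R k)
             + Num.min (normv (vmap (@cos R) b - @ones R _))
                       (normv (vmap (@cos R) b + @ones R _)) ->
      eta <= @Fq R k z b)
  /\
  (* (ii) *)
  (exists eps0 C : R, 0 < eps0 /\ 0 < C /\
    forall z b : 'rV[R]_(k.-1),
      @PiSet R k z ->
      normv (z - @zcr R k) + normv (b - pi *: @ones R _) <= eps0 ->
      C^-1 * (normv (z - @zcr R k) + normv (b - pi *: @ones R _)) <= @Fq R k z b).
Proof. split; [exact: part1|exact: part2]. Qed.
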